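(* Let $\mathcal{T}$ be a projective Fraïssé family of finite trees whose distinguished epimorphisms are monotone and which allows splitting edges. Let $(G_i)_{i<\omega}$ with epimorphisms $f^m_n\colon G_m\to G_n$ be a Fraïssé sequence for $\mathcal{T}$, let $\mathbb{G}=\varprojlim G_i\subseteq\prod_i G_i$ be the projective Fraïssé limit and $\pi\colon\mathbb{G}\to|\mathbb{G}|$ its topological realization. Then $\pi$ maps every point of weak coherence of $\mathbb{G}$ to a ramification point of the dendrite $|\mathbb{G}|$.
   Context: Graphs have reflexive symmetric edge relations; topological graphs carry a compact, Hausdorff, zero-dimensional, second countable topology with closed edge set; finite graphs are discrete. An epimorphism $g\colon B\to A$ of topological graphs is a continuous surjection with: $\langle a_1,a_2\rangle\in E(A)$ iff some $b_i\in g^{-1}(a_i)$ satisfy $\langle b_1,b_2\rangle\in E(B)$. Connectedness: a topological graph is disconnected if its vertex set splits into two nonempty disjoint closed sets with no edges between them. An epimorphism is monotone if all fibres are connected. A finite tree is a finite connected graph without cycles of nontrivial edges; the order $\mathrm{ord}(a)$ of a vertex is its number of neighbours other than itself (= number of components of the tree minus $a$). For a monotone epimorphism $f\colon B\to A$ of finite trees and $a\in A$ with $\mathrm{ord}(a)=n\ge3$, let $A_0,\dots,A_{n-1}$ be the components of $A\setminus\{a\}$; $a$ is a point of weak coherence of $f$, witnessed by $b$, if $b\in f^{-1}(a)$, $m=\mathrm{ord}(b)\ge n$, and there is an injection $p\colon n\to m$ such that, with $B_0,\dots,B_{m-1}$ the components of $B\setminus\{b\}$, $f^{-1}(A_i)\subseteq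 B_{p(i)}$ for all $i$. A point $x=(x_i)\in\varprojlim G_i$ is a point of weak coherence of the limit if there is $k$ such that for all $l>k$, $x_l$ is a point of weak coherence of $f^{l+1}_l$ witnessed by $x_{l+1}$. A projective Fraïssé family is a class of finite graphs with a distinguished class of epimorphisms, countably many up to isomorphism, containing identities, closed under composition, with joint projection and projective amalgamation. A Fraïssé sequence is a sequence $(G_n)$ with compatible distinguished epimorphisms $f^m_n$ such that every member of the family is the image of some $G_n$ under a distinguished epimorphism, and for every distinguished $f\colon A\to G_m$ there are $n\ge m$ and distinguished $g\colon G_n\to A$ with $f\circ g=f^n_m$; its inverse limit (edges coordinatewise) is the projective Fraïssé limit. Allowing splitting edges: for every member $G$ and nontrivial edge $\{a,b\}$, replacing it by a path $a,\ast,b$ through a new vertex gives a member, and the maps collapsing $\ast$ to $a$, resp. $b$, are distinguished. Under these hypotheses $\mathbb G$ is a prespace (edge relation an equivalence relation), $\pi$ is the quotient map onto $|\mathbb{G}|=\mathbb{G}/E(\mathbb{G})$, and $|\mathbb{G}|$ is a dendrite (compact metrizable connected locally connected space with unique arcs between points). A ramification point of a dendrite $X$ is a point $x$ with $X\setminus\{x\}$ having more than two components. *)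

(* Defs.v *)
From HB Require Import structures.
From mathcomp Require Import all_boot all_order all_algebra.
From mathcomp Require Import all_classical.
From mathcomp Require Import topology discrete_topology function_spaces
  subtype_topology.

Set Implicit Arguments.
Unset Strict Implicit.
Unset Printing Implicit Defensive.

Record fin_graph := FGraph {
  vert :> finType;
  edge : rel vert;
  edge_refl : reflexive edge;
  edge_sym : symmetric edge }.

Definition graph_epi (B A : fin_graph) (g : B -> A) : Prop :=
  (forall a : A, exists b : B, g b = a) /\
  (forall a1 a2 : A, edge a1 a2 <->
     exists b1 b2 : B, [/\ g b1 = a1, g b2 = a2 & edge b1 b2]).

Definition graph_iso (B A : fin_graph) (h : B -> A) : Prop :=
  bijective h /\ forall x y : B, edge (h x) (h y) = edge x y.

(* connectedness of the induced subgraph on S : no splitting of S into two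
   nonempty disjoint (closed: automatic for finite graphs) sets with no edge
   between them *)
Definition connectedb (A : fin_graph) (S : {set A}) : bool :=
  ~~ [exists U : {set A}, exists V : {set A},
       [&& U :|: V == S, U :&: V == finset.set0, U != finset.set0, V != finset.set0 &
           [forall u in U, forall v in V, ~~ edge u v]]].

Definition components (A : fin_graph) (S : {set A}) : {set {set A}} :=
  [set C : {set A} | [&& C != finset.set0, C \subset S, connectedb C &
     [forall D : {set A}, ((C \proper D) && (D \subset S)) ==> ~~ connectedb D]]].

Definition is_tree (A : fin_graph) : Prop :=
  connectedb [set: A] /\
  forall s : seq A, uniq s -> 3 <= size s -> ~~ cycle (@edge A) s.

Definition vorder (A : fin_graph) (a : A) : nat := #|[set b | edge a b & b != a]|.

Definition monotone_epi (B A : fin_graph) (g : B -> A) : Prop :=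
  forall a : A, connectedb [set b | g b == a].

Definition weak_coherence_witness (B A : fin_graph) (f : B -> A) (a : A) (b : B)
  : Prop :=
  [/\ 3 <= vorder a, f b = a, vorder a <= vorder b &
    exists p : {set A} -> {set B},
      {in components (~: [set a]) &, injective p} /\
      forall C, C \in components (~: [set a]) ->
        p C \in components (~: [set b]) /\ f @^-1: C \subset p C].

(* Splitting an edge {a,b} : vertices option G, None is the new vertex *)

Section Split.
Variables (G : fin_graph) (a b : G).

Definition split_rel (x y : option G) : bool :=
  match x, y with
  | Some u, Some v =>
      edge u v && ~~ ([&& u == a, v == b & a != b] || [&& u == b, v == a & a != b])
  | Some u, None | None, Some u => (u == a) || (u == b)
  | None, None => true
  end.

Lemma split_rel_refl : reflexive split_rel.
Proof.
case=> [u|] //=; rewrite edge_refl /=.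
apply/negP => /orP [] /and3P [/eqP Hua /eqP Hub Hab];
  by move: Hab; rewrite -Hua -Hub eqxx.
Qed.

Lemma split_rel_sym : symmetric split_rel.
Proof.
case=> [u|]; case=> [v|] //=.
rewrite edge_sym; congr (_ && ~~ _); rewrite orbC.
by congr (_ || _); rewrite !andbA; congr (_ && _); rewrite andbC.
Qed.

Definition split_edge : fin_graph :=
  @FGraph (option G : finType) split_rel split_rel_refl split_rel_sym.

Definition collapse_to (c : G) (x : split_edge) : G :=
  if x is Some u then u else c.

End Split.

(*   F : the class of members, D : the distinguished epimorphisms      *)

Definition distinguished_rel := forall B A : fin_graph, (B -> A) -> Prop.

Definition proj_fraisse_family (F : fin_graph -> Prop) (D : distinguished_rel)
  : Prop :=
  [/\
      (forall (B A : fin_graph) (g : B -> A), D B A g -> [/\ F B, F A & graph_epi g]),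
      (exists H : nat -> fin_graph, forall A, F A ->
          exists n, exists h : H n -> A, graph_iso h),
      (forall A, F A -> D A A id),
      (forall (C B A : fin_graph) (g : C -> B) (f : B -> A),
          D C B g -> D B A f -> D C A (f \o g)) &
      (
      (forall A B, F A -> F B ->
          exists C : fin_graph, exists (g : C -> A) (h : C -> B), D C A g /\ D C B h) /\
      (forall (A B C : fin_graph) (f : B -> A) (g : C -> A), D B A f -> D C A g ->
          exists E : fin_graph, exists (f0 : E -> B) (g0 : E -> C),
            [/\ D E B f0, D E C g0 & f \o f0 =1 g \o g0]))].

Definition family_of_trees (F : fin_graph -> Prop) : Prop :=
  forall A, F A -> is_tree A.

Definition monotone_family (D : distinguished_rel) : Prop :=
  forall (B A : fin_graph) (g : B -> A), D B A g -> monotone_epi g.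

Definition allows_splitting_edges (F : fin_graph -> Prop) (D : distinguished_rel)
  : Prop :=
  forall (G : fin_graph) (a b : G), F G -> a != b -> edge a b ->
    exists H : fin_graph, exists k : H -> split_edge a b,
      [/\ F H, graph_iso k,
          D H G (collapse_to a \o k) & D H G (collapse_to b \o k)].

Section Sequence.
Variables (G : nat -> fin_graph) (bond : forall n, G n.+1 -> G n).

(* f^{k+n}_n : G_(k+n) -> G_n *)
Fixpoint fmn (n k : nat) : G (k + n) -> G n :=
  match k return G (k + n) -> G n with
  | 0 => fun x => x
  | k'.+1 => fun x => @fmn n k' (@bond (k' + n) x)
  end.

End Sequence.

Definition fraisse_sequence (F : fin_graph -> Prop) (D : distinguished_rel)
  (G : nat -> fin_graph) (bond : forall n, G n.+1 -> G n) : Prop :=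
  [/\ (forall n, D (G n.+1) (G n) (@bond n)),
      (forall A : fin_graph, F A -> exists n, exists g : G n -> A, D (G n) A g) &
      (forall m (A : fin_graph) (f : A -> G m), D A (G m) f ->
          exists k, exists g : G (k + m) -> A,
            D (G (k + m)) A g /\ f \o g =1 @fmn G bond m k)].

Section Limit.
Local Open Scope classical_set_scope.
Variables (G : nat -> fin_graph) (bond : forall n, G n.+1 -> G n).

Definition prodG : topologicalType :=
  prod_topology (fun i => discrete_topology (G i)).

Definition lim_set : set prodG :=
  [set x : prodG | forall n, @bond n (x n.+1) = x n].

Definition plim : topologicalType := lim_set.

Definition coord (x : plim) (i : nat) : G i := (val x : prodG) i.

Definition lim_edge (x y : plim) : Prop := forall i, edge (coord x i) (coord y i).

Definition edge_class (x : plim) : set plim := [set y | lim_edge x y].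

(* |G| = G / E(G) : the set of E-classes with the quotient topology *)
Definition realization_set : set (set plim) := range edge_class.

Definition realization : Type := realization_set.

HB.instance Definition _ := Choice.on realization.

Definition realize (x : plim) : realization :=
  SigSub (mem_set (imageT edge_class x)).

Definition realization_open (U : set realization) : Prop :=
  open (realize @^-1` U).

Lemma realization_openT : realization_open setT.
Proof. by rewrite /realization_open preimage_setT; exact: openT. Qed.

Lemma realization_openI (U V : set realization) :
  realization_open U -> realization_open V -> realization_open (U `&` V).
Proof. by move=> oU oV; rewrite /realization_open preimage_setI; exact: openI. Qed.

Lemma realization_open_bigU (I : Type) (f : I -> set realization) :
  (forall i, realization_open (f i)) -> realization_open (\bigcup_i f i).
Proof.
move=> ofi; rewrite /realization_open preimage_bigcup.
by apply: bigcup_open => i _; exact: ofi.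
Qed.

HB.instance Definition _ := isOpenTopological.Build realization
  realization_openT realization_openI realization_open_bigU.

End Limit.

Definition lim_weak_coherence (G : nat -> fin_graph) (bond : forall n, G n.+1 -> G n)
  (x : plim bond) : Prop :=
  exists k, forall l, k < l ->
    weak_coherence_witness (@bond l) (coord x l) (coord x l.+1).

Local Open Scope classical_set_scope.

Definition ramification_point (X : topologicalType) (p : X) : Prop :=
  exists x y z : X,
    [/\ x != p, y != p, z != p &
      [/\ connected_component (~` [set p]) x != connected_component (~` [set p]) y,
          connected_component (~` [set p]) x != connected_component (~` [set p]) z &
          connected_component (~` [set p]) y != connected_component (~` [set p]) z]].

(* Main.v *)
Require Import Defs.
From HB Require Import structures.
From mathcomp Require Import all_boot all_order all_algebra.
From mathcomp Require Import all_classical.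
From mathcomp Require Import topology discrete_topology function_spaces
  subtype_topology.
From mathcomp Require Import zify.
Import mathcomp.boot.fintype mathcomp.boot.finset.
Set Implicit Arguments. Unset Strict Implicit. Unset Printing Implicit Defensive.
Local Notation coord := Defs.coord.

Section GraphLemmas.

Variable A : fin_graph.
Implicit Types C S U V : {set A}.

Lemma connP C : reflect (forall U V, U :|: V = C -> U :&: V = finset.set0 ->
   (forall u v, u \in U -> v \in V -> ~~ edge u v) -> U = finset.set0 \/ V = finset.set0)
  (connectedb C).
Proof.
rewrite /connectedb; apply: (iffP idP).
- move=> /existsPn h U V hUV hI hE.
  have /existsPn /(_ V) := h U; rewrite hUV hI !eqxx /=.
  case: (eqVneq U finset.set0) => [-> _|U0]; first by left.
  case: (eqVneq V finset.set0) => [-> _|V0]; first by right.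
  rewrite /=; move/negP; case.
  apply/forallP => u; apply/implyP => uU; apply/forallP => v; apply/implyP => vV.
  exact: hE.
- move=> h; apply/negP => /existsP [U /existsP [V /and5P [/eqP hUV /eqP hI U0 V0 /forallP hE]]].
  have hE' : forall u v, u \in U -> v \in V -> ~~ edge u v.
    move=> u v uU vV; move: (hE u); rewrite uU /= => /forallP /(_ v).
    by rewrite vV.
  by case: (h U V hUV hI hE') => e; [move: U0|move: V0]; rewrite e eqxx.
Qed.

Lemma conn_side C U V : connectedb C -> C \subset U :|: V -> U :&: V = finset.set0 ->
  (forall u v, u \in U -> v \in V -> ~~ edge u v) -> C \subset U \/ C \subset V.
Proof.
move=> /connP h sub dis E.
have := h (C :&: U) (C :&: V).
case.
- by rewrite -setIUr; apply/setIidPl.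
- by rewrite setIACA setIid dis setI0.
- by move=> u v; rewrite !inE => /andP [_ uU] /andP [_ vV]; exact: E.
- move=> e; right; apply/subsetP => c cC.
  have := subsetP sub c cC; rewrite in_setU => /orP [cU|//].
  have : c \in C :&: U by rewrite inE cC cU.
  by rewrite e inE.
- move=> e; left; apply/subsetP => c cC.
  have := subsetP sub c cC; rewrite in_setU => /orP [//|cV].
  have : c \in C :&: V by rewrite inE cC cV.
  by rewrite e inE.
Qed.

Lemma conn_union C1 C2 u1 u2 : connectedb C1 -> connectedb C2 ->
  u1 \in C1 -> u2 \in C2 -> edge u1 u2 -> connectedb (C1 :|: C2).
Proof.
move=> c1 c2 h1 h2 e; apply/connP => U V hUV dis E.
have s1 : C1 \subset U :|: V by rewrite hUV subsetUl.
have s2 : C2 \subset U :|: V by rewrite hUV subsetUr.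
have other : forall W W', W :|: W' = C1 :|: C2 -> W :&: W' = finset.set0 ->
    C1 \subset W -> C2 \subset W -> W' = finset.set0.
  move=> W W' hW dW sW1 sW2; apply/eqP; rewrite -subset0; apply/subsetP => v vV.
  have : v \in W :|: W' by rewrite in_setU vV orbT.
  rewrite hW in_setU => /orP [vC|vC].
    have : v \in W :&: W' by rewrite inE vV (subsetP sW1 _ vC).
    by rewrite dW inE.
  have : v \in W :&: W' by rewrite inE vV (subsetP sW2 _ vC).
  by rewrite dW inE.
case: (conn_side c1 s1 dis E) => [s1U|s1V]; case: (conn_side c2 s2 dis E) => [s2U|s2V].
- by right; exact: (other U V).
- by move: (E _ _ (subsetP s1U _ h1) (subsetP s2V _ h2)); rewrite e.
- by move: (E _ _ (subsetP s2U _ h2) (subsetP s1V _ h1)); rewrite edge_sym e.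
- left; apply: (other V U) => //; first by rewrite setUC.
  by rewrite setIC.
Qed.

Lemma conn_set1 (a : A) : connectedb [set a].
Proof.
apply/connP => U V h dis E.
case: (set_0Vmem U) => [->|[u uU]]; first by left.
case: (set_0Vmem V) => [->|[v vV]]; first by right.
exfalso.
have : u \in U :|: V by rewrite in_setU uU.
rewrite h in_set1 => /eqP eu.
have : v \in U :|: V by rewrite in_setU vV orbT.
rewrite h in_set1 => /eqP ev.
have : u \in U :&: V by rewrite in_setI uU eu -ev vV.
by rewrite dis in_set0.
Qed.

Lemma compP S C : C \in components S ->
  [/\ C != finset.set0, C \subset S, connectedb C &
    forall D : {set A}, C \proper D -> D \subset S -> ~~ connectedb D].
Proof.
rewrite inE => /and4P [C0 CS cC /forallP mx]; split => // D CD DS.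
by move: (mx D); rewrite CD DS.
Qed.

Lemma comp_exists S v : v \in S -> exists2 C, C \in components S & v \in C.
Proof.
move=> vS.
pose P := [pred C : {set A} | (v \in C) && (C \subset S) && connectedb C].
have P1 : P [set v] by rewrite /= set11 sub1set vS conn_set1.
case: (@arg_maxnP _ [set v] P (fun C => #|C|) P1) => C /andP [/andP [vC CS] cC] mx.
exists C => //; rewrite inE; apply/and4P; split => //.
  by apply/set0Pn; exists v.
apply/forallP => D; apply/implyP => /andP [CD DS]; apply/negP => cD.
have : P D by rewrite /= (subsetP (proper_sub CD)) // DS cD.
move/mx => le; have := proper_card CD; rewrite ltnNge; move/negP; apply; exact: le.
Qed.

Lemma comp_adj S C u w : C \in components S -> u \in C -> w \in S ->
  edge u w -> w \in C.
Proof.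
move=> /compP [C0 CS cC mx] uC wS e; apply/negPn/negP => wC.
have := mx (C :|: [set w]).
rewrite properE subsetUl /= subUset subxx /= sub1set (negbTE wC) /=.
rewrite subUset CS sub1set wS => /(_ isT isT) /negP; apply.
by apply: (conn_union cC (conn_set1 w) uC (set11 w)).
Qed.

Lemma comp_unique S C1 C2 v : C1 \in components S -> C2 \in components S ->
  v \in C1 -> v \in C2 -> C1 = C2.
Proof.
have key : forall C1 C2, C1 \in components S -> C2 \in components S ->
    v \in C1 -> v \in C2 -> C2 \subset C1.
  move=> D1 D2 hD1 hD2 v1 v2.
  have [_ D1S cD1 mx] := compP hD1.
  have [_ D2S cD2 _] := compP hD2.
  apply/negPn/negP => nsub.
  have := mx (D1 :|: D2).
  rewrite properE subsetUl /= subUset subxx /= nsub subUset D1S D2S.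
  move=> /(_ isT isT) /negP; apply.
  exact: (conn_union cD1 cD2 v1 v2 (edge_refl v)).
move=> h1 h2 v1 v2; apply/eqP; rewrite eqEsubset.
by rewrite (key C1 C2) // (key C2 C1).
Qed.

Lemma comp_sub S C : C \in components S -> C \subset S.
Proof. by case/compP. Qed.

Definition redge (C : {set A}) : rel A := [rel x y | [&& x \in C, y \in C & edge x y]].

Lemma conn_connect C u v : connectedb C -> u \in C -> v \in C ->
  connect (redge C) u v.
Proof.
move=> /connP h uC vC.
pose R := [set w in C | connect (redge C) u w].
have := h R (C :\: R).
case.
- apply/setP => w; rewrite !inE; case: (w \in C); case: (connect _ u w) => //.
- apply/setP => w; rewrite !inE; case: (w \in C); case: (connect _ u w) => //.
- move=> r w; rewrite !inE => /andP [rC ur] /andP [nr wC]; apply/negP => e.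
  move: nr => /negP; apply; rewrite ?wC /=; apply: (connect_trans ur).
  apply: connect1 => /=; apply/and3P; split => //.
- move=> e; have : u \in R by rewrite inE uC connect0.
  by rewrite e inE.
- move=> e; have : v \in C :\: R -> False by rewrite e inE.
  rewrite !inE vC /=. case: (connect _ u v) => //= ; by move=> /(_ isT).
Qed.

Lemma redge_all C x p : path (redge C) x p -> all (mem C) p.
Proof.
elim: p x => //= y p IH x /andP [/and3P [_ yC _] /IH] ->.
by rewrite andbT.
Qed.

Lemma tree_nb (T : is_tree A) (a n1 n2 : A) C : n1 != n2 -> edge a n1 ->
  edge a n2 -> C \in components (~: [set a]) -> n1 \in C -> n2 \in C -> False.
Proof.
move=> n12 e1 e2 hC c1 c2.
have [_ CS cC _] := compP hC.
have /connectP [p pp lp] := conn_connect cC c1 c2.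
move: lp; case: (shortenP pp) => p' pp' up' _ lp.
have aC : a \notin C.
  by apply/negP => /(subsetP CS); rewrite !inE eqxx.
have allp := redge_all pp'.
have := T.2 (a :: n1 :: p').
have -> : uniq (a :: n1 :: p').
  rewrite cons_uniq up' andbT; apply/negP; rewrite inE => /orP [/eqP an|ap].
    by move: aC; rewrite an c1.
  by move: aC; have := allP allp a ap => /= ->.
have -> : 3 <= size (a :: n1 :: p').
  case: p' {pp' up' allp} lp => [/= e|//]; by move: n12; rewrite e eqxx.
move=> /(_ isT isT) /negP; apply.
rewrite /cycle rcons_cons /= e1 /= rcons_path.
rewrite -lp edge_sym e2 andbT.
by apply: sub_path pp' => u w /= /and3P [].
Qed.

End GraphLemmas.

Fixpoint down (G : nat -> Type) (bond : forall n, G n.+1 -> G n)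
  (dflt : forall n, G n) (n m : nat) : G m -> G n :=
  match m as m0 return G m0 -> G n with
  | 0 => fun w => match 0 =P n with
                  | ReflectT e => eq_rect 0 G w n e | ReflectF _ => dflt n end
  | m'.+1 => fun w => match m'.+1 =P n with
                  | ReflectT e => eq_rect _ G w n e
                  | ReflectF _ => @down G bond dflt n m' (bond m' w) end
  end.

Lemma down_id G bond dflt n (w : G n) : @down G bond dflt n n w = w.
Proof.
case: n w => [|n] w /=; case: (_ =P _) => // e;
  by rewrite (eq_axiomK e).
Qed.

Lemma down_step G bond dflt n m (w : G m.+1) : n <> m.+1 ->
  @down G bond dflt n m.+1 w = @down G bond dflt n m (bond m w).
Proof. move=> ne /=; destruct eqP as [e|] => //. by case: ne. Qed.

Lemma bond_down G bond dflt n m (w : G m) : n < m ->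
  bond n (@down G bond dflt n.+1 m w) = @down G bond dflt n m w.
Proof.
elim: m w => [//|m IH] w lt.
case: (eqVneq n m) => [e|nm].
  subst n.
  by rewrite down_id down_step ?down_id //; lia.
rewrite down_step; last by move=> [] e; move: nm; rewrite e eqxx.
rewrite down_step; last by lia.
apply: IH; move: lt nm; rewrite ltnS leq_eqVlt => /orP [/eqP->|//].
by rewrite eqxx.
Qed.

Fixpoint upth (G : nat -> Type) (bond : forall n, G n.+1 -> G n)
  (dflt : forall n, G n) (pre : forall n, G n -> G n.+1) (l : nat) (v : G l)
  (m : nat) : G m :=
  match m with
  | 0 => @down G bond dflt 0 l v
  | m'.+1 => if m'.+1 <= l then @down G bond dflt m'.+1 l v
             else pre m' (@upth G bond dflt pre l v m')
  end.

Lemma upth_low G bond dflt pre l v m : m <= l ->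
  @upth G bond dflt pre l v m = @down G bond dflt m l v.
Proof. by case: m => [|m] //= ->. Qed.

Lemma upth_coh G bond dflt pre l v m :
  (forall n (a : G n), bond n (pre n a) = a) ->
  bond m (@upth G bond dflt pre l v m.+1) = @upth G bond dflt pre l v m.
Proof.
move=> hpre /=; case: ifP => h.
  by rewrite upth_low ?bond_down //; apply: ltnW.
by rewrite hpre.
Qed.

Lemma upth_l G bond dflt pre l v : @upth G bond dflt pre l v l = v.
Proof. by rewrite upth_low // down_id. Qed.

Section Limit.
Variables (F : fin_graph -> Prop) (D : distinguished_rel)
  (G : nat -> fin_graph) (bond : forall n : nat, G n.+1 -> G n).
Variables (hfam : proj_fraisse_family F D) (hsplit : allows_splitting_edges F D)
  (hseq : fraisse_sequence F D bond).

Lemma coordP (z : plim bond) n : bond (coord z n.+1) = coord z n.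
Proof. by have := set_mem (valP z); apply. Qed.

Lemma bond_epi n : graph_epi (@bond n).
Proof.
case: hfam => h1 _ _ _ _; case: hseq => hD _ _.
by case: (h1 _ _ _ (hD n)).
Qed.

Lemma bond_edge n (u v : G n.+1) : edge u v -> edge (bond u) (bond v).
Proof.
move=> e; have [_ he] := bond_epi n.
by apply/(he _ _).2; exists u, v.
Qed.

Lemma fmn_coord (z : plim bond) n k : @fmn G bond n k (coord z (k + n)) = coord z n.
Proof. by elim: k => //= k IH; rewrite coordP. Qed.

Lemma noedge_up (z w : plim bond) J d : ~~ edge (coord z J) (coord w J) ->
  ~~ edge (coord z (d + J)) (coord w (d + J)).
Proof.
move=> h; elim: d => //= d IH; apply/negP => e.
by move: IH; rewrite -(coordP z) -(coordP w) (bond_edge e).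
Qed.

Lemma noedge_le (z w : plim bond) J J' : J <= J' -> ~~ edge (coord z J) (coord w J) ->
  ~~ edge (coord z J') (coord w J').
Proof. by move=> le h; rewrite -(subnK le); exact: noedge_up. Qed.

Lemma exists_thread (x0 : plim bond) n (v : G n) : exists y : plim bond, coord y n = v.
Proof.
have surj : forall m (a : G m), exists b, bond b == a.
  by move=> m a; have [hs _] := bond_epi m; case: (hs a) => b <-; exists b.
pose pre m (a : G m) : G m.+1 := xchoose (surj m a).
have hpre : forall m (a : G m), bond (pre m a) = a.
  by move=> m a; apply/eqP; exact: (xchooseP (surj m a)).
pose Y := @upth G bond (fun m => coord x0 m) pre n v.
have hY : (Y : prodG G) \in lim_set bond.
  by apply: mem_set => m; exact: upth_coh.
exists (exist _ (Y : prodG G) hY).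
exact: upth_l.
Qed.


Lemma FG J : F (G J).
Proof.
case: hfam => h1 _ _ _ _; case: hseq => hD _ _.
by case: (h1 _ _ _ (hD J)).
Qed.

Lemma split_lift J (a b c : G J) : a != b -> edge a b -> (c == a) || (c == b) ->
  exists d, exists h : G (d + J) -> split_edge a b,
    [/\ forall u v, edge u v -> edge (h u) (h v),
        forall y, exists u, h u = y &
        forall u, collapse_to c (h u) = @fmn G bond J d u].
Proof.
move=> ab eab hc.
case: hfam => h1 _ _ _ _; case: hseq => _ _ hext.
have [H [k [FH [[k' kK Kk] kedge] Da Db]]] := hsplit (FG J) ab eab.
have Dc : D (collapse_to c \o k).
  by case/orP: hc => /eqP ->.
have [d [g [Dg hg]]] := hext J H _ Dc.
have [_ _ [gs ge]] := h1 _ _ _ Dg.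
exists d, (k \o g); split.
- move=> u v e /=; have /= -> := kedge (g u) (g v); apply/(ge _ _).2; by exists u, v.
- move=> y; case: (gs (k' y)) => u hu; exists u; by rewrite /= hu Kk.
- move=> u; exact: hg.
Qed.

Lemma lim_edge_refl (z : plim bond) : lim_edge z z.
Proof. by move=> i; exact: edge_refl. Qed.

Lemma lim_edge_sym (z w : plim bond) : lim_edge z w -> lim_edge w z.
Proof. by move=> h i; rewrite edge_sym; exact: h. Qed.

Lemma lim_edge_trans (x y z : plim bond) : lim_edge x y -> lim_edge y z -> lim_edge x z.
Proof.
move=> hxy hyz J; apply/negPn/negP => nxz.
have xyJ : coord x J != coord y J.
  by apply/negP => /eqP e; move: nxz; rewrite e (hyz J).
have yzJ : coord z J != coord y J.
  by apply/negP => /eqP e; move: nxz; rewrite e (hxy J).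
have xzJ : coord z J != coord x J.
  by apply/negP => /eqP e; move: nxz; rewrite e edge_refl.
have hc0 : (coord y J == coord x J) || (coord y J == coord y J) by rewrite eqxx orbT.
have [d [h [he hs hc]]] := split_lift xyJ (hxy J) hc0.
set m := d + J.
have hx : h (coord x m) = Some (coord x J).
  move: (hc (coord x m)); rewrite fmn_coord.
  by case: (h _) => [u /= ->|/= e] //; move: xyJ; rewrite e eqxx.
have hz : h (coord z m) = Some (coord z J).
  move: (hc (coord z m)); rewrite fmn_coord.
  by case: (h _) => [u /= ->|/= e] //; move: yzJ; rewrite e eqxx.
have exy := he _ _ (hxy m).
have eyz := he _ _ (hyz m).
move: exy eyz (hc (coord y m)); rewrite hx hz fmn_coord.
case: (h (coord y m)) => [u|] /=.
  by move=> + _ eu; rewrite eu !eqxx xyJ /= andbF.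
by rewrite (negbTE xzJ) (negbTE yzJ).
Qed.

End Limit.

Local Open Scope classical_set_scope.

Lemma sep_lemma (T : topologicalType) (A S : set T) (u w : T) : S `<=` A ->
  (exists2 O, open O & S = A `&` O) -> (exists2 C, closed C & S = A `&` C) ->
  S u -> A w -> ~ S w ->
  connected_component A u != connected_component A w.
Proof.
move=> SA [O oO SO] [C cC SC] Su Aw nSw; apply/eqP => e.
have : connected_component A u w by rewrite e; exact: connected_component_refl.
case => B [Bu BA cB] Bw.
have e2 : B `&` S = B.
  apply: cB.
- by exists u.
- exists O => //; rewrite SO classical_sets.setIA.
  by rewrite (classical_sets.setIidl BA).
- exists C => //; rewrite SC classical_sets.setIA.
  by rewrite (classical_sets.setIidl BA).
apply: nSw; have : (B `&` S) w by rewrite e2.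
by case.
Qed.

Section Real.
Variables (G : nat -> fin_graph) (bond : forall n : nat, G n.+1 -> G n).

Lemma cyl_open (J : nat) (v : G J) : open [set z : plim bond | coord z J = v].
Proof.
have h : continuous (fun z : plim bond => (coord z J : discrete_topology (G J))).
  move=> z.
  have h1 : continuous (fun z : plim bond => (set_val z : prodG G)).
    exact: initial_continuous.
  have h2 := @proj_continuous nat (fun i => discrete_topology (G i)) J.
  exact: (continuous_comp (h1 z) (h2 _)).
move: h; rewrite continuousP => /(_ [set v]); apply.
exact: (@discrete_open (discrete_topology (G J))).
Qed.

Lemma open_cyl (O : set (plim bond)) :
  (forall z, O z -> exists J, forall w, coord w J = coord z J -> O w) -> open O.
Proof.
move=> h; rewrite openE => z Oz; have [J hJ] := h z Oz.
rewrite /interior.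
apply: (@filterS _ _ _ [set w | coord w J = coord z J]); first by move=> w /hJ.
by apply: open_nbhs_nbhs; split; [exact: cyl_open|].
Qed.

Lemma open_realE (U : set (realization bond)) :
  open (@realize G bond @^-1` U) -> open U.
Proof. by []. Qed.

End Real.

Section Main.
Variables (F : fin_graph -> Prop) (D : distinguished_rel)
  (G : nat -> fin_graph) (bond : forall n : nat, G n.+1 -> G n).
Variables (hfam : proj_fraisse_family F D) (hsplit : allows_splitting_edges F D)
  (hseq : fraisse_sequence F D bond).

Lemma realize_eq (z w : plim bond) :
  realize z = realize w <-> lim_edge z w.
Proof.
split.
- move/(congr1 (@proj1_sig _ _)) => /= e.
  have : edge_class w w by exact: lim_edge_refl.
  by rewrite -e.
- move=> zw; apply: val_inj => /=.
  apply/funext => y; apply/propext; split => h.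
  + exact: (lim_edge_trans hfam hsplit hseq (lim_edge_sym zw)).
  + exact: (lim_edge_trans hfam hsplit hseq zw).
Qed.


Variables (x : plim bond) (k : nat)
  (hk : forall l, k < l -> weak_coherence_witness (@bond l) (coord x l) (coord x l.+1)).

Definition Same J (u v : plim bond) :=
  exists2 C, C \in components (~: [set coord x J]) & (coord u J \in C) && (coord v J \in C).

Definition NotSame J (u v : plim bond) :=
  exists C, exists C', [/\ C \in components (~: [set coord x J]),
    C' \in components (~: [set coord x J]), C != C', coord u J \in C & coord v J \in C'].

Lemma same_up J u v : k < J -> Same J u v -> Same J.+1 u v.
Proof.
move=> kJ [C hC /andP [uC vC]].
have [_ _ _ [p [pinj pc]]] := hk kJ.
have [pC sub] := pc C hC.
exists (p C) => //.
by rewrite !(subsetP sub) // inE coordP.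
Qed.

Lemma notsame_up J u v : k < J -> NotSame J u v -> NotSame J.+1 u v.
Proof.
move=> kJ [C [C' [hC hC' CC' uC vC']]].
have [_ _ _ [p [pinj pc]]] := hk kJ.
have [pC sub] := pc C hC.
have [pC' sub'] := pc C' hC'.
exists (p C), (p C'); split => //.
- by apply/negP => /eqP /(pinj _ _ hC hC') e; move: CC'; rewrite e eqxx.
- by rewrite (subsetP sub) // inE coordP.
- by rewrite (subsetP sub') // inE coordP.
Qed.

Lemma same_le J J' u v : k < J -> J <= J' -> Same J u v -> Same J' u v.
Proof.
move=> kJ le h; rewrite -(subnK le); elim: (J' - J) => //= d IH.
by apply: same_up => //; apply: (leq_trans kJ); rewrite leq_addl.
Qed.

Lemma notsame_le J J' u v : k < J -> J <= J' -> NotSame J u v -> NotSame J' u v.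
Proof.
move=> kJ le h; rewrite -(subnK le); elim: (J' - J) => //= d IH.
by apply: notsame_up => //; apply: (leq_trans kJ); rewrite leq_addl.
Qed.

Lemma same_notsame J u v : Same J u v -> NotSame J u v -> False.
Proof.
move=> [C0 h0 /andP [u0 v0]] [C [C' [hC hC' CC' uC vC']]].
have e1 := comp_unique h0 hC u0 uC.
have e2 := comp_unique h0 hC' v0 vC'.
by move: CC'; rewrite -e1 -e2 eqxx.
Qed.

Lemma same_sym J u v : Same J u v -> Same J v u.
Proof. by move=> [C hC /andP [a b]]; exists C; rewrite ?a ?b. Qed.

Lemma same_trans J u v w : Same J u v -> Same J v w -> Same J u w.
Proof.
move=> [C hC /andP [uC vC]] [C' hC' /andP [vC' wC']].
have e := comp_unique hC hC' vC vC'.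
by exists C => //; rewrite uC e wC'.
Qed.

Lemma same_self J u : coord u J != coord x J -> Same J u u.
Proof.
move=> ne; have uS : coord u J \in ~: [set coord x J] by rewrite !inE.
have [C hC uC] := comp_exists uS.
by exists C; rewrite ?uC.
Qed.

Lemma same_adj J u v w : Same J u v -> edge (coord u J) (coord w J) ->
  coord w J != coord x J -> Same J w v.
Proof.
move=> [C hC /andP [uC vC]] e ne; exists C => //.
by rewrite vC andbT; apply: (comp_adj hC uC _ e); rewrite !inE.
Qed.

Lemma same_coord J u w v : coord u J = coord w J -> Same J u v -> Same J w v.
Proof. by rewrite /Same => ->. Qed.

Definition Br (s z : plim bond) := exists2 J, k < J & Same J z s.

Lemma nedge_ex (z : plim bond) : ~ lim_edge z x ->
  exists J0, ~~ edge (coord z J0) (coord x J0).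
Proof.
move=> h; apply: contrapT => hn; apply: h => i; apply/negPn/negP => ni.
by apply: hn; exists i.
Qed.

Lemma ne_of_nedge (z : plim bond) J : ~~ edge (coord z J) (coord x J) ->
  coord z J != coord x J.
Proof. by apply: contraNneq => ->; rewrite edge_refl. Qed.

Lemma br_sat s z w : lim_edge z w -> ~ lim_edge w x -> Br s z -> Br s w.
Proof.
move=> zw nwx [J kJ hJ]; have [J0 hJ0] := nedge_ex nwx.
pose M := maxn J J0.
have kM : k < M by apply: (leq_trans kJ); rewrite leq_maxl.
exists M => //.
apply: (same_adj (same_le kJ (leq_maxl J J0) hJ) (zw M)).
apply: ne_of_nedge; apply: (noedge_le hfam hseq (leq_maxr J J0) hJ0).
Qed.


Lemma realize_ne (z : plim bond) : ~ lim_edge z x -> realize z <> realize x.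
Proof. by move=> h /(realize_eq z x). Qed.

Lemma realize_ne_coord (z w : plim bond) J : coord w J = coord z J ->
  ~~ edge (coord z J) (coord x J) -> realize w <> realize x.
Proof.
move=> e ne /(realize_eq w x) h; move: ne; rewrite -e (h J) //.
Qed.

Lemma sep_seeds (s t : plim bond) : ~ lim_edge s x -> ~ lim_edge t x -> Br s s ->
  (exists2 J, k < J & NotSame J s t) ->
  connected_component (~` [set realize x]) (realize s) !=
  connected_component (~` [set realize x]) (realize t).
Proof.
move=> nsx ntx bss [J kJ nst].
pose p := realize x.
pose S := [set c : realization bond | c <> p /\ exists z, realize z = c /\ Br s z].
have SA : S `<=` ~` [set p] by move=> c [].
apply: (@sep_lemma _ _ S).
- exact: SA.
- exists S; last by apply/seteqP; split => c; [move=> h; split => //; exact: SA|case].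
  apply: open_realE; apply: open_cyl => z [zp [w [wz bw]]].
  have nzx : ~ lim_edge z x by move=> /(realize_eq z x).
  have bz : Br s z.
    by apply: (br_sat _ nzx bw); apply/(realize_eq w z).
  have [J0 hJ0] := nedge_ex nzx.
  case: bz => J1 kJ1 hJ1.
  pose M := maxn J0 J1.
  exists M => w' hw'.
  split; first by apply: (realize_ne_coord hw'); apply: (noedge_le hfam hseq (leq_maxl J0 J1) hJ0).
  exists w'; split => //; exists M.
    by apply: (leq_trans kJ1); rewrite leq_maxr.
  by apply: (same_coord (esym hw')); apply: (same_le kJ1 (leq_maxr J0 J1) hJ1).
- exists (~` (~` [set p] `&` ~` S)).
    rewrite closedC; apply: open_realE; apply: open_cyl => z [zp nS].
    have nzx : ~ lim_edge z x by move=> /(realize_eq z x).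
    have nbz : ~ Br s z by move=> bz; apply: nS; split => //; exists z.
    have [J0 hJ0] := nedge_ex nzx.
    pose M := maxn J0 k.+1.
    have kM : k < M by rewrite leq_maxr.
    have hM := noedge_le hfam hseq (leq_maxl J0 k.+1) hJ0.
    exists M => w hw.
    have wp := realize_ne_coord hw hM.
    split => //; move=> [_ [w' [w'w bw']]].
    have nwx : ~ lim_edge w x by move=> /(realize_eq w x).
    have [J' kJ' hJ'] := br_sat (proj1 (realize_eq w' w) w'w) nwx bw'.
    have szz := same_self (ne_of_nedge hM).
    have swz := same_coord (esym hw) szz.
    pose N := maxn M J'.
    apply: nbz; exists N; first by apply: (leq_trans kM); rewrite leq_maxl.
    apply: (same_trans (same_sym (same_le kM (leq_maxl M J') swz))).
    exact: (same_le kJ' (leq_maxr M J') hJ').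
  apply/seteqP; split => c.
    by move=> Sc; split; [exact: SA|case=> _].
  move=> [Ac h]; apply: contrapT => nSc; apply: h; split => //.
- split; first exact: realize_ne.
  by exists s.
- exact: realize_ne.
- move=> [_ [w [wt bw]]].
  have [J' kJ' hJ'] := br_sat (proj1 (realize_eq w t) wt) ntx bw.
  pose N := maxn J J'.
  apply: (@same_notsame N s t).
    exact: (same_sym (same_le kJ' (leq_maxr J J') hJ')).
  exact: (notsame_le kJ (leq_maxl J J') nst).
Qed.


Lemma seed J (a n : G J) : a = coord x J -> n != a -> edge a n ->
  exists s : plim bond, coord s J = n /\ ~ lim_edge s x.
Proof.
move=> ea na e.
have an : a != n by rewrite eq_sym.
have hc0 : (n == a) || (n == n) by rewrite eqxx orbT.
have [d [h [he hs hc]]] := split_lift hfam hsplit hseq an e hc0.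
pose m := d + J.
have hx : h (coord x m) = Some a.
  move: (hc (coord x m)); rewrite fmn_coord -ea.
  by case: (h _) => [u /= ->|/= e'] //; move: na; rewrite e' eqxx.
have [w hw] := hs (Some n).
have [s hs'] := exists_thread hfam hseq x w.
exists s; split.
  by rewrite -(fmn_coord s J d) hs' -hc hw.
move=> h'; have := he _ _ (h' m); rewrite hs' hw hx /=.
by rewrite !eqxx an /= andbT orbT andbF.
Qed.

End Main.

Theorem mainTheorem3 (F : fin_graph -> Prop) (D : distinguished_rel)
  (G : nat -> fin_graph) (bond : forall n : nat, G n.+1 -> G n) :
  proj_fraisse_family F D ->
  family_of_trees F ->
  monotone_family D ->
  allows_splitting_edges F D ->
  fraisse_sequence F D bond ->
  forall x : plim bond, lim_weak_coherence x ->
    ramification_point (realize x).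
Proof.
move=> hfam htree hmono hsplit hseq x [k hk].
pose l := k.+1.
have kl : k < l := ltnSn k.
have [h3 _ _ _] := hk l kl.
have T := htree _ (FG hfam hseq l).
move: h3; rewrite /vorder => /card_gt2P [n0 [n1 [n2 [[i0 i1 i2] [d01 d12 d20]]]]].
move: i0 i1 i2; rewrite !inE => /andP [e0 ne0] /andP [e1 ne1] /andP [e2 ne2].
have m0 : n0 \in ~: [set coord x l] by rewrite !inE.
have m1 : n1 \in ~: [set coord x l] by rewrite !inE.
have m2 : n2 \in ~: [set coord x l] by rewrite !inE.
have [C0 hC0 c0] := comp_exists m0.
have [C1 hC1 c1] := comp_exists m1.
have [C2 hC2 c2] := comp_exists m2.
have C01 : C0 != C1.
  by apply/negP => /eqP e; apply: (tree_nb T d01 e0 e1 hC0 c0); rewrite e.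
have C12 : C1 != C2.
  by apply/negP => /eqP e; apply: (tree_nb T d12 e1 e2 hC1 c1); rewrite e.
have C20 : C2 != C0.
  by apply/negP => /eqP e; apply: (tree_nb T d20 e2 e0 hC2 c2); rewrite e.
have [s0 [hs0 ns0]] := seed hfam hsplit hseq erefl ne0 e0.
have [s1 [hs1 ns1]] := seed hfam hsplit hseq erefl ne1 e1.
have [s2 [hs2 ns2]] := seed hfam hsplit hseq erefl ne2 e2.
have B0 : Br x k s0 s0 by exists l => //; exists C0; rewrite // hs0 c0.
have B1 : Br x k s1 s1 by exists l => //; exists C1; rewrite // hs1 c1.
have B2 : Br x k s2 s2 by exists l => //; exists C2; rewrite // hs2 c2.
have N01 : exists2 J, k < J & NotSame x J s0 s1.
  by exists l => //; exists C0, C1; rewrite hs0 hs1.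
have N02 : exists2 J, k < J & NotSame x J s0 s2.
  by exists l => //; exists C0, C2; rewrite hs0 hs2 eq_sym.
have N12 : exists2 J, k < J & NotSame x J s1 s2.
  by exists l => //; exists C1, C2; rewrite hs1 hs2.
exists (realize s0), (realize s1), (realize s2); split.
- by apply/eqP; exact: (realize_ne hfam hsplit hseq ns0).
- by apply/eqP; exact: (realize_ne hfam hsplit hseq ns1).
- by apply/eqP; exact: (realize_ne hfam hsplit hseq ns2).
split.
- exact: (sep_seeds hfam hsplit hseq hk ns0 ns1 B0 N01).
- exact: (sep_seeds hfam hsplit hseq hk ns0 ns2 B0 N02).
- exact: (sep_seeds hfam hsplit hseq hk ns1 ns2 B1 N12).
Qed.
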